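(* Consider the influence-based model $X(t+1)=f_{\mathrm{IbM}}(X(t))$, $f_{\mathrm{IbM}}(X)=\operatorname{diag}(|X|\mathbf{1}_n)^{-1}XX$. Let $Q_{\mathrm{IbM}}$ be the set of matrices $PYP^{\top}\in\mathcal{S}^{+}_{\mathrm{rs\text{-}symm}}$ with $P$ a permutation matrix and $Y$ block diagonal with each diagonal block of the form $\operatorname{sign}(w)w^{\top}$, $w\in\mathbb{R}^m$, $|w|\succ\mathbf{0}_m$, $m\le n$. Then: (i) each element of $Q_{\mathrm{IbM}}$ of rank one is a locally stable fixed point of $f_{\mathrm{IbM}}$; (ii) for every $X(0)\in\mathcal{S}^{+}_{\mathrm{rs\text{-}symm}}$, the following are equivalent: (a) the solution $X(t)$ satisfies the non-vanishing appraisal condition $\liminf_{t\to\infty}\min_{i,j}|X_{ij}(t)|>0$; (b) there exists $t_0\ge0$ such that $G(X(t))$ satisfies social balance for all $t\ge t_0$; (c) there exists $X^*\in Q_{\mathrm{IbM}}$ of rank one such that $\lim_{t\to\infty}X(t)=X^*$.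
   Context: $|X|$ is entry-wise absolute value, $\mathbf{1}_n$ the all-ones vector, $\operatorname{sign}$ entry-wise sign, $\succ$ entry-wise strict inequality. $\mathcal{S}^{+}_{\mathrm{rs\text{-}symm}}=\{X\in\mathbb{R}^{n\times n}:\operatorname{sign}(X)=\operatorname{sign}(X)^{\top},\ X_{ii}>0\ \forall i,\ \exists\gamma\succ\mathbf{0}_n\text{ with }\operatorname{diag}(\gamma)X=(\operatorname{diag}(\gamma)X)^{\top}\}$. A fixed point $X^*$ of a map $f$ is locally stable if for every $\epsilon>0$ there is $\delta>0$ such that $\max_{i,j}|X_{ij}(0)-X^*_{ij}|<\delta$ implies $\max_{i,j}|X_{ij}(t)-X^*_{ij}|<\epsilon$ for all $t\ge0$, where $X(t+1)=f(X(t))$. $G(X)$ is the weighted digraph with adjacency matrix $X$; it satisfies social balance if $X_{ii}>0$ for all $i$ and $\operatorname{sign}(X_{ij})\operatorname{sign}(X_{jk})\operatorname{sign}(X_{ki})=1$ for all $i,j,k$. *)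

(* Defs.v *)
From HB Require Import structures.
From mathcomp Require Import all_boot all_order all_algebra all_fingroup.
From mathcomp Require Import all_classical all_reals all_analysis.
Set Implicit Arguments. Unset Strict Implicit. Unset Printing Implicit Defensive.
Import Order.TTheory GRing.Theory Num.Theory.
Import numFieldNormedType.Exports.
Local Open Scope ring_scope.

Section Defs.
Variables (R : realType) (n : nat).
Implicit Types (X : 'M[R]_n).

Definition sgmx X : 'M[R]_n := map_mx Num.sg X.

Definition rs_symm_pos X : Prop :=
  [/\ sgmx X = (sgmx X)^T,
      forall i, 0 < X i i
    & exists gamma : 'I_n -> R, (forall i, 0 < gamma i) /\
        diag_mx (\row_i gamma i) *m X = (diag_mx (\row_i gamma i) *m X)^T].

Definition f_IbM X : 'M[R]_n :=
  invmx (diag_mx (\row_i (\sum_k `|X i k|))) *m (X *m X).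

Definition traj X0 (t : nat) : 'M[R]_n := iter t f_IbM X0.

Definition maxdist (X Y : 'M[R]_n) : R := \big[Num.max/0]_(i < n) \big[Num.max/0]_(j < n) `|X i j - Y i j|.

Definition locally_stable (f : 'M[R]_n -> 'M[R]_n) (Xs : 'M[R]_n) : Prop :=
  forall eps : R, 0 < eps -> exists delta : R, 0 < delta /\
    forall X0 : 'M[R]_n, maxdist X0 Xs < delta ->
      forall t, maxdist (iter t f X0) Xs < eps.

(* Block diagonal Y whose diagonal blocks are sign(w) w^T with |w| > 0:
   the block of index i is given by a nondecreasing label b i, the vectors
   w of the blocks are concatenated into one vector w : 'I_n -> R. *)
Definition blockdiag_sgn_outer (Y : 'M[R]_n) : Prop :=
  exists (b : 'I_n -> nat) (w : 'I_n -> R),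
    {homo b : i j / (i <= j)%N >-> (i <= j)%N} /\
    (forall i, w i != 0) /\
    forall i j, Y i j = if b i == b j then Num.sg (w i) * w j else 0.

Definition Q_IbM X : Prop :=
  rs_symm_pos X /\
  exists (s : 'S_n) (Y : 'M[R]_n),
    blockdiag_sgn_outer Y /\ X = perm_mx s *m Y *m (perm_mx s)^T.

Definition social_balance X : Prop :=
  (forall i, 0 < X i i) /\
  forall i j k, Num.sg (X i j) * Num.sg (X j k) * Num.sg (X k i) = 1.

(* min_{i,j} |X_ij| as an extended real (+oo for the empty min) *)
Definition minabs X : \bar R :=
  \big[Order.min/+oo%E]_(i < n) \big[Order.min/+oo%E]_(j < n) (`|X i j|)%:E.

Definition nonvanishing_appraisal (X : nat -> 'M[R]_n) : Prop :=
  (0 < limn_einf (fun t => minabs (X t)))%E.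

End Defs.

(* Main.v *)
Require Import Defs.
From HB Require Import structures.
From mathcomp Require Import all_boot all_order all_algebra all_fingroup.
From mathcomp Require Import all_classical all_reals all_analysis.
From mathcomp Require Import ring lra.
From Stdlib Require Import Classical.
Import Order.TTheory GRing.Theory Num.Theory.
Import numFieldNormedType.Exports.
Local Open Scope classical_set_scope.
Local Open Scope ring_scope.
Set Implicit Arguments. Unset Strict Implicit. Unset Printing Implicit Defensive.
Definition dsum (R : realType) n (X : 'M[R]_n) (i : 'I_n) : R := \sum_k `|X i k|.

Lemma invmx_diag (R : realType) n (r : 'I_n -> R) :
  (forall i, r i != 0) ->
  invmx (diag_mx (\row_i r i)) = diag_mx (\row_i (r i)^-1).
Proof.
move=> nz.
have H : diag_mx (\row_i r i) *m diag_mx (\row_i (r i)^-1) = 1%:M.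
  apply/matrixP => i j; rewrite mul_diag_mx !mxE.
  case: (eqVneq i j) => [->|ne]; first by rewrite mulr1n mulfV.
  by rewrite mulr0n mulr0.
have U : diag_mx (\row_i r i) \in unitmx by case: (mulmx1_unit H).
by rewrite -[LHS]mulmx1 -H mulmxA mulVmx // mul1mx.
Qed.

Lemma fE (R : realType) n (X : 'M[R]_n) :
  (forall i, dsum X i != 0) ->
  forall i j, f_IbM X i j = (\sum_k X i k * X k j) / dsum X i.
Proof.
move=> nz i j; rewrite /f_IbM invmx_diag; last by move=> k; exact: nz.
by rewrite mul_diag_mx !mxE mulrC.
Qed.

Definition rsI (R : realType) n (X : 'M[R]_n) : Prop :=
  (forall i, 0 < X i i) /\
  exists g : 'I_n -> R, (forall i, 0 < g i) /\ forall i j, g i * X i j = g j * X j i.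

Lemma rs_symm_rsI (R : realType) n (X : 'M[R]_n) : rs_symm_pos X -> rsI X.
Proof.
case=> _ dp [g [gp E]]; split => //; exists g; split => // i j.
have := congr1 (fun M : 'M[R]_n => M i j) E; by rewrite !mul_diag_mx !mxE => ->.
Qed.

Lemma dsum_ge (R : realType) n (X : 'M[R]_n) i k : `|X i k| <= dsum X i.
Proof.
rewrite /dsum (bigD1 k) //= lerDl; apply: sumr_ge0 => l _; exact: normr_ge0.
Qed.

Lemma dsum_pos (R : realType) n (X : 'M[R]_n) i : 0 < X i i -> 0 < dsum X i.
Proof.
move=> h; apply: lt_le_trans (dsum_ge X i i); by rewrite normr_gt0 gt_eqF.
Qed.

Lemma rsI_f (R : realType) n (X : 'M[R]_n) : rsI X -> rsI (f_IbM X).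
Proof.
case=> dp [g [gp E]].
have nz : forall i, dsum X i != 0 by move=> i; rewrite gt_eqF // dsum_pos.
have prod0 : forall i k, 0 <= X i k * X k i.
  move=> i k; rewrite -(pmulr_rge0 _ (gp k)) mulrCA -(E i k) mulrCA.
  apply: mulr_ge0; [exact: ltW | rewrite -expr2; exact: sqr_ge0].
split.
  move=> i; rewrite fE // divr_gt0 ?dsum_pos //.
  rewrite (bigD1 i) //= ltr_pwDl ?sumr_ge0 //; last by rewrite mulr_gt0.
exists (fun i => g i * dsum X i); split.
  by move=> i; rewrite mulr_gt0 // dsum_pos.
move=> i j; rewrite !fE // -!mulrA ![dsum X _ * _]mulrC !divfK // !mulr_sumr.
apply: eq_bigr => k _; rewrite mulrA (E i k) -mulrA mulrCA (E k j) mulrCA.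
by rewrite [X k i * _]mulrC.
Qed.
Lemma ex_argmin (R : realType) (T : finType) (x0 : T) (F : T -> R) :
  exists k, forall i, F k <= F i.
Proof.
case: (@Order.TotalTheory.arg_minP _ R _ x0 xpredT F isT) => k _ H.
by exists k => i; apply: H.
Qed.
Lemma ex_argmax (R : realType) (T : finType) (x0 : T) (F : T -> R) :
  exists k, forall i, F i <= F k.
Proof.
case: (@Order.TotalTheory.arg_maxP _ R _ x0 xpredT F isT) => k _ H.
by exists k => i; apply: H.
Qed.
Lemma ent_le_norm (R : realType) n (M : 'M[R]_n) i j : `|M i j| <= `|M|.
Proof.
rewrite [X in _ <= X]/Num.Def.normr /= mx_normrE.
exact: (@le_bigmax _ _ _ 0 (fun ij : 'I_n * 'I_n => `|M ij.1 ij.2|) (i, j)).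
Qed.
Lemma norm_le_ent (R : realType) n (M : 'M[R]_n) b : 0 <= b ->
  (forall i j, `|M i j| <= b) -> `|M| <= b.
Proof.
move=> b0 H; rewrite [X in X <= _]/Num.Def.normr /= mx_normrE.
by apply: bigmax_le => // [[i j]] _; apply: H.
Qed.
Lemma ev (P : nat -> Prop) N : (forall t, (N <= t)%N -> P t) -> \forall t \near \oo, P t.
Proof. by move=> H; exists N => // t /= Ht; apply: H. Qed.

Lemma iterS' (T : Type) (f : T -> T) t x : iter t.+1 f x = f (iter t f x).
Proof. by []. Qed.

Definition fpos (R : realType) n (A : 'M[R]_n) : 'M[R]_n :=
  \matrix_(i, j) ((\sum_k A i k * A k j) / (\sum_k A i k)).

Definition G (R : realType) n (s : 'I_n -> R) (A : 'M[R]_n) : 'M[R]_n :=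
  \matrix_(i, j) (s i * s j * A i j).

Definition pos (R : realType) n (A : 'M[R]_n) := forall i j, 0 < A i j.

Lemma pos_sum (R : realType) n (F : 'I_n -> R) i :
  (forall k, 0 <= F k) -> 0 < F i -> 0 < \sum_k F k.
Proof.
move=> h hi; rewrite (bigD1 i) //= ltr_pwDl // sumr_ge0 // => k _; exact: h.
Qed.

Lemma fpos_pos (R : realType) n (A : 'M[R]_n) : pos A -> pos (fpos A).
Proof.
move=> hA i j; rewrite mxE divr_gt0 //.
  apply: (@pos_sum _ _ (fun k => A i k * A k j) i) => [k|] /=.
    by rewrite mulr_ge0 // ltW.
  by rewrite mulr_gt0.
by apply: (@pos_sum _ _ (fun k => A i k) i) => [k|] //=; rewrite ltW.
Qed.

Lemma norm_s (R : realType) (x : R) : x * x = 1 -> `|x| = 1.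
Proof.
move=> h; have : `|x| * `|x| = 1 by rewrite -normrM h normr1.
have := normr_ge0 x; move: (`|x|) => y y0 hy; nra.
Qed.

Lemma gauge_f (R : realType) n (s : 'I_n -> R) (A : 'M[R]_n) :
  (forall i, s i * s i = 1) -> pos A -> f_IbM (G s A) = G s (fpos A).
Proof.
move=> hs hA.
have ds : forall i, dsum (G s A) i = \sum_k A i k.
  move=> i; apply: eq_bigr => k _; rewrite mxE !normrM (norm_s (hs i)) (norm_s (hs k)) !mul1r.
  by rewrite gtr0_norm.
have nz : forall i, dsum (G s A) i != 0.
  by move=> i; rewrite ds gt_eqF // (@pos_sum _ _ (fun k => A i k) i) // => k; rewrite ltW.
apply/matrixP => i j; rewrite fE // ds !mxE mulrA; congr (_ / _).
rewrite mulr_sumr; apply: eq_bigr => k _; rewrite !mxE.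
have -> : s i * s k * A i k * (s k * s j * A k j) =
          s i * s j * (A i k * A k j) * (s k * s k) by ring.
by rewrite hs mulr1.
Qed.

Lemma gauge_iter (R : realType) n (s : 'I_n -> R) (A : 'M[R]_n) t :
  (forall i, s i * s i = 1) -> pos A ->
  iter t (@f_IbM R n) (G s A) = G s (iter t (@fpos R n) A) /\ pos (iter t (@fpos R n) A).
Proof.
move=> hs hA; elim: t => [|t [IH1 IH2]] //=.
by rewrite IH1 gauge_f //; split => //; apply: fpos_pos.
Qed.

Lemma wavg_bounds (R : realType) n (w x : 'I_n -> R) lo hi :
  (forall k, 0 <= w k) -> 0 < \sum_k w k -> (forall k, lo <= x k <= hi) ->
  lo <= (\sum_k w k * x k) / (\sum_k w k) <= hi.
Proof.
move=> w0 S0 hx; apply/andP; split.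
  rewrite ler_pdivlMr // mulr_sumr; apply: ler_sum => k _.
  by have := w0 k; case/andP: (hx k) => ? ? ?; nra.
rewrite ler_pdivrMr // mulr_sumr; apply: ler_sum => k _.
by have := w0 k; case/andP: (hx k) => ? ? ?; nra.
Qed.

Lemma wavg_gap (R : realType) n (w x : 'I_n -> R) hi k0 :
  (forall k, 0 <= w k) -> 0 < \sum_k w k -> (forall k, x k <= hi) ->
  (\sum_k w k * x k) / (\sum_k w k) <= hi - w k0 / (\sum_k w k) * (hi - x k0).
Proof.
move=> w0 S0 hx.
have key : w k0 * (hi - x k0) <= \sum_k w k * (hi - x k).
  rewrite (bigD1 k0) //= lerDl; apply: sumr_ge0 => k _.
  by rewrite mulr_ge0 // subr_ge0.
have E : \sum_k w k * (hi - x k) = hi * \sum_k w k - \sum_k w k * x k.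
  rewrite mulr_sumr -sumrB; apply: eq_bigr => k _; ring.
rewrite E in key.
set S := \sum_k w k in S0 key *.
set T := \sum_k w k * x k in key *.
have Sn : S != 0 by rewrite gt_eqF.
rewrite ler_pdivrMr // mulrBl mulrAC divfK //.
move: key; set u := w k0 * (hi - x k0); lra.
Qed.

Lemma mono_nat (R : realType) (u : nat -> R) :
  (forall t, u t <= u t.+1) -> forall s t, (s <= t)%N -> u s <= u t.
Proof.
move=> h s t /subnKC <-; elim: (t - s)%N => [|k IH]; first by rewrite addn0.
by rewrite addnS; apply: le_trans IH (h _).
Qed.

Lemma geo_small (R : realType) (q K e : R) : 0 <= q < 1 -> 0 <= K -> 0 < e ->
  exists N, forall t, (N <= t)%N -> q ^+ t * K <= e.
Proof.
move=> /andP[q0 q1] K0 e0.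
have qn : `|q| < 1 by rewrite ger0_norm.
have eps0 : 0 < e / (K + 1) by rewrite divr_gt0 // ltr_wpDl.
have := (cvgrPdist_lt _ _).1 (cvg_expr qn) _ eps0.
case=> N _ HN; exists N => t Nt.
have := HN t Nt; rewrite /= sub0r normrN ger0_norm ?exprn_ge0 // => h.
have qt0 : 0 <= q ^+ t by rewrite exprn_ge0.
have : q ^+ t * (K + 1) < e by rewrite -ltr_pdivlMr // ltr_wpDl.
nra.
Qed.

Lemma fpos_lim (R : realType) n (n_gt0 : (0 < n)%N) (A0 : 'M[R]_n) : pos A0 ->
  exists v : 'I_n -> R, (forall j, 0 < v j) /\
    forall e, 0 < e -> exists N, forall t, (N <= t)%N ->
      forall i j, `|iter t (@fpos R n) A0 i j - v j| <= e.
Proof.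
move=> A0p.
pose A t := iter t (@fpos R n) A0.
have Apos : forall t, pos (A t) by elim => [|t IH] //=; apply: fpos_pos.
have AS : forall t, A t.+1 = fpos (A t) by [].
have Apos' : forall t i j, 0 <= A t i j by move=> t i j; apply: ltW; apply: Apos.
pose i0 := Ordinal n_gt0.
have [p0 Hp0] := ex_argmin (i0, i0) (fun p : 'I_n * 'I_n => A0 p.1 p.2).
have [q0 Hq0] := ex_argmax (i0, i0) (fun p : 'I_n * 'I_n => A0 p.1 p.2).
set mu := A0 p0.1 p0.2 in Hp0; set Mx := A0 q0.1 q0.2 in Hq0.
have mu0 : 0 < mu by apply: A0p.
have bnd : forall t i j, mu <= A t i j <= Mx.
  elim => [|t IH] i j; first by apply/andP; split; [apply: (Hp0 (i, j)) | apply: (Hq0 (i, j))].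
  rewrite AS mxE; apply: wavg_bounds.
  - by move=> k; apply: Apos'.
  - by apply: (@pos_sum _ _ (fun k => A t i k) i) => [k|]; [apply: Apos' | apply: Apos].
  - by move=> k; apply: IH.
have Mx0 : 0 < Mx by apply: lt_le_trans mu0 _; case/andP: (bnd 0%N i0 i0) => a b; apply: le_trans a b.
have nM0 : 0 < n%:R * Mx by rewrite mulr_gt0 // ltr0n.
pose eta := mu / (n%:R * Mx).
have eta0 : 0 < eta by rewrite divr_gt0.
have Spos : forall t i, 0 < \sum_k A t i k.
  by move=> t i; apply: (@pos_sum _ _ (fun k => A t i k) i) => [k|]; [apply: Apos' | apply: Apos].
have etaw : forall t i k, eta <= A t i k / \sum_l A t i l.
  move=> t i k; rewrite ler_pdivlMr //.
  have SM : \sum_l A t i l <= n%:R * Mx.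
    have -> : n%:R * Mx = \sum_(l < n) Mx by rewrite sumr_const card_ord mulr_natl.
    by apply: ler_sum => l _; case/andP: (bnd t i l).
  apply: le_trans (_ : eta * (n%:R * Mx) <= _).
    by apply: ler_wpM2l => //; apply: ltW.
  by rewrite divfK ?gt_eqF //; case/andP: (bnd t i k).
have eta1 : eta <= 1.
  apply: le_trans (etaw 0%N i0 i0) _; rewrite ler_pdivrMr // mul1r.
  by rewrite (bigD1 i0) //= lerDl sumr_ge0 // => k _; exact: (Apos' 0%N).
pose amin t j := Order.arg_min i0 xpredT (fun i => A t i j).
pose amax t j := Order.arg_max i0 xpredT (fun i => A t i j).
pose lo t j := A t (amin t j) j.
pose hi t j := A t (amax t j) j.
have lo_le : forall t i j, lo t j <= A t i j.
  move=> t i j; rewrite /lo /amin.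
  by case: (@Order.TotalTheory.arg_minP _ R _ i0 xpredT (fun i => A t i j) isT) => k _ H; apply: H.
have hi_ge : forall t i j, A t i j <= hi t j.
  move=> t i j; rewrite /hi /amax.
  by case: (@Order.TotalTheory.arg_maxP _ R _ i0 xpredT (fun i => A t i j) isT) => k _ H; apply: H.
have step_in : forall t i j, lo t j <= A t.+1 i j <= hi t j.
  move=> t i j; rewrite AS mxE; apply: wavg_bounds.
  - by move=> k; apply: Apos'.
  - exact: Spos.
  - by move=> k; rewrite lo_le hi_ge.
have lo_mono : forall j t, lo t j <= lo t.+1 j.
  by move=> j t; case/andP: (step_in t (amin t.+1 j) j).
have hi_mono : forall j t, hi t.+1 j <= hi t j.
  by move=> j t; case/andP: (step_in t (amax t.+1 j) j).
have gap : forall t j, hi t.+1 j - lo t.+1 j <= (1 - eta) * (hi t j - lo t j).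
  move=> t j.
  have h1 : hi t.+1 j <= hi t j - eta * (hi t j - lo t j).
    rewrite {1}/hi AS mxE.
    apply: le_trans (wavg_gap (amin t j) _ (Spos t (amax t.+1 j)) _) _.
    - by move=> k; apply: Apos'.
    - by move=> k; apply: hi_ge.
    rewrite lerD2l lerN2 -/(lo t j); apply: ler_wpM2r.
      by rewrite subr_ge0; apply: le_trans (hi_ge t (amin t j) j).
    exact: etaw.
  have := lo_mono j t; lra.
have gapN : forall t j, hi t j - lo t j <= (1 - eta) ^+ t * (Mx - mu).
  elim => [|t IH] j.
    rewrite expr0 mul1r; case/andP: (bnd 0%N (amax 0%N j) j) => _ a.
    by case/andP: (bnd 0%N (amin 0%N j) j) => b _; rewrite /hi /lo; lra.
  apply: le_trans (gap t j) _; rewrite exprS -mulrA; apply: ler_wpM2l.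
    by rewrite subr_ge0.
  exact: IH.
pose v j := sup (range (fun t => lo t j)).
have lo_v : forall t j, lo t j <= v j.
  move=> t j; apply: sup_upper_bound; last by exists t.
  split; first by exists (lo 0%N j), 0%N.
  exists (hi 0%N j) => _ [s _ <-].
  apply: le_trans (lo_le s (amin s j) j) _; apply: le_trans (hi_ge s (amin s j) j) _.
  rewrite -lerN2; apply: (@mono_nat R (fun t => - hi t j)) => // u.
  by rewrite lerN2; apply: hi_mono.
have v_hi : forall t j, v j <= hi t j.
  move=> t j; apply: ge_sup; first by exists (lo 0%N j), 0%N.
  move=> _ [s _ <-].
  apply: le_trans (mono_nat (lo_mono j) (leq_maxl s t)) _.
  apply: le_trans (hi_ge _ (amin (maxn s t) j) j) _.
  rewrite -lerN2; apply: (@mono_nat R (fun t => - hi t j)); last exact: leq_maxr.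
  by move=> u; rewrite lerN2; apply: hi_mono.
exists v; split.
  move=> j; apply: lt_le_trans mu0 _; apply: le_trans (lo_v 0%N j).
  by case/andP: (bnd 0%N (amin 0%N j) j).
move=> e e0.
have q01 : 0 <= 1 - eta < 1 by apply/andP; split; rewrite ?subr_ge0 // ltrBlDr ltrDl.
have K0 : 0 <= Mx - mu by rewrite subr_ge0; case/andP: (bnd 0%N i0 i0) => a b; apply: le_trans a b.
have [N HN] := @geo_small R (1 - eta) (Mx - mu) e q01 K0 e0.
exists N => t Nt i j.
have := HN t Nt; have := gapN t j; have := lo_v t j; have := v_hi t j.
have := lo_le t i j; have := hi_ge t i j.
rewrite -/(A t) => a b c d g h.
rewrite ler_norml; apply/andP; split; lra.
Qed.

Definition sgout (R : realType) n (W : 'I_n -> R) : 'M[R]_n :=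
  \matrix_(i, j) (Num.sg (W i) * W j).

Lemma Q_of (R : realType) n (n_gt0 : (0 < n)%N) (W : 'I_n -> R) :
  (forall j, W j != 0) -> Q_IbM (sgout W) /\ \rank (sgout W) = 1%N.
Proof.
move=> Wn; split.
  split.
    split.
    - by apply/matrixP => i j; rewrite /sgmx !mxE !sgrM !Num.Theory.sgr_id mulrC.
    - by move=> i; rewrite mxE -normrEsg normr_gt0.
    - exists (fun i => `|W i|); split; first by move=> i; rewrite normr_gt0.
      apply/matrixP => i j; rewrite !mul_diag_mx !mxE !mulrA.
      by rewrite ![`|_| * Num.sg _]mulrC -!numEsg mulrC.
  exists 1%g, (sgout W); split.
    exists (fun _ => 0%N), W; split; first by [].
    by split => // i j; rewrite mxE.
  by rewrite perm_mx1 trmx1 mul1mx mulmx1.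
have -> : sgout W = (\col_i Num.sg (W i)) *m (\row_j W j).
  by apply/matrixP => i j; rewrite !mxE big_ord1 !mxE.
apply/eqP; rewrite eqn_leq; apply/andP; split.
  by apply: leq_trans (mxrankM_maxl _ _) (rank_leq_col _).
rewrite lt0n mxrank_eq0; apply/negP => /eqP h.
have := congr1 (fun M : 'M[R]_n => M (Ordinal n_gt0) (Ordinal n_gt0)) h.
rewrite !mxE big_ord1 !mxE -normrEsg => /eqP; by rewrite normr_eq0 (negbTE (Wn _)).
Qed.

Lemma minor_aux (R : realType) n r (C : 'M[R]_(n, r)) (D : 'M[R]_(r, n)) i j :
  r = 1%N -> (C *m D) i i * (C *m D) j j = (C *m D) i j * (C *m D) j i.
Proof.
move=> Er; subst r; rewrite !mxE !big_ord1; ring.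
Qed.

Lemma Q_rank1 (R : realType) n (Xs : 'M[R]_n) :
  Q_IbM Xs -> \rank Xs = 1%N ->
  exists W : 'I_n -> R, (forall j, W j != 0) /\ Xs = sgout W.
Proof.
move=> [_ [s [Y [[b [w [_ [wn Yd]]]] EX]]]] rk.
have minor : forall i j, Xs i i * Xs j j = Xs i j * Xs j i.
  move=> i j; rewrite -(mulmx_base Xs); exact: minor_aux.
have XE : forall i j, Xs i j = Y (s i) (s j).
  move=> i j; rewrite EX tr_perm_mx -col_permE -row_permE !mxE.
  by [].
exists (fun i => w (s i)); split; first by move=> j; apply: wn.
apply/matrixP => i j; rewrite mxE XE Yd.
case: eqP => // hb; exfalso.
have := minor i j; rewrite !XE !Yd !eqxx (introF eqP hb).
have hb' : b (s j) != b (s i) by apply/eqP => h; apply: hb.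
rewrite (negbTE hb') mul0r -!normrEsg => /eqP.
by rewrite mulf_eq0 !normr_eq0 !(negbTE (wn _)).
Qed.

Lemma sg_sq (R : realType) (x : R) : x != 0 -> Num.sg x * Num.sg x = 1.
Proof. by move=> h; rewrite -expr2 sqr_sg h. Qed.

Lemma sgout_G (R : realType) n (W : 'I_n -> R) :
  sgout W = G (fun i => Num.sg (W i)) (\matrix_(i, j) `|W j|).
Proof. by apply/matrixP => i j; rewrite !mxE -mulrA -numEsg. Qed.

Lemma gauge_dist (R : realType) n (W : 'I_n -> R) (A : 'M[R]_n) i j :
  (forall j, W j != 0) ->
  `|G (fun i => Num.sg (W i)) A i j - sgout W i j| = `|A i j - `|W j| |.
Proof.
move=> Wn; rewrite sgout_G !mxE -mulrBr normrM normrM !normr_sg !Wn.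
by rewrite !mul1r.
Qed.

Lemma maxdist_le (R : realType) n (X Y : 'M[R]_n) i j :
  `|X i j - Y i j| <= maxdist X Y.
Proof.
rewrite /maxdist; apply: le_trans (le_bigmax _ _ i).
exact: (le_bigmax _ (fun j => `|X i j - Y i j|) j).
Qed.

Lemma maxdist_lt (R : realType) n (X Y : 'M[R]_n) e : 0 < e ->
  (forall i j, `|X i j - Y i j| < e) -> maxdist X Y < e.
Proof.
move=> e0 h; rewrite /maxdist; apply: bigmax_lt => // i _.
by apply: bigmax_lt => // j _.
Qed.

Lemma part_i (R : realType) n (n_gt0 : (0 < n)%N) (Xs : 'M[R]_n) :
  Q_IbM Xs -> \rank Xs = 1%N -> f_IbM Xs = Xs /\ locally_stable (@f_IbM R n) Xs.
Proof.
move=> hQ hr; have [W [Wn ->]] := Q_rank1 hQ hr.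
pose s i := Num.sg (W i).
have hs : forall i, s i * s i = 1 by move=> i; apply: sg_sq.
pose C : 'M[R]_n := \matrix_(i, j) `|W j|.
have Cpos : pos C by move=> i j; rewrite mxE normr_gt0.
have fC : fpos C = C.
  apply/matrixP => i j; rewrite !mxE.
  under eq_bigr do rewrite !mxE.
  have SC : \sum_k C i k = \sum_k `|W k| by apply: eq_bigr => k _; rewrite mxE.
  rewrite SC -mulr_suml mulrAC divff ?mul1r // gt_eqF //.
  by apply: (@pos_sum _ _ (fun k => `|W k|) i) => [k|]; rewrite ?normr_ge0 ?normr_gt0.
split; first by rewrite sgout_G gauge_f // fC.
move=> eps eps0.
have [k0 Hk0] := ex_argmin (Ordinal n_gt0) (fun j => `|W j|).
pose mu := `|W k0|.
have mu0 : 0 < mu by rewrite normr_gt0.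
exists (Num.min eps mu); split; first by rewrite lt_min eps0 mu0.
move=> X0; set e := maxdist X0 (sgout W) => he.
have e0 : 0 <= e by apply: le_trans (maxdist_le X0 (sgout W) k0 k0); apply: normr_ge0.
have emu : e < mu by apply: lt_le_trans he _; rewrite ge_min lexx orbT.
have eeps : e < eps by apply: lt_le_trans he _; rewrite ge_min lexx.
pose A0 : 'M[R]_n := \matrix_(i, j) (s i * s j * X0 i j).
have XA : X0 = G s A0.
  apply/matrixP => i j; rewrite !mxE !mulrA.
  have -> : s i * s j * s i * s j = (s i * s i) * (s j * s j) by ring.
  by rewrite !hs !mul1r.
have A0d : forall i j, `|A0 i j - `|W j| | <= e.
  move=> i j; rewrite -(gauge_dist _ _ _ Wn) -XA; exact: maxdist_le.
have A0p : pos A0.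
  move=> i j; have := A0d i j; rewrite ler_norml => /andP[h2 h3].
  have h1 := Hk0 j; rewrite /mu in emu; lra.
have inv : forall t i j, `|iter t (@fpos R n) A0 i j - `|W j| | <= e.
  elim => [|t IH] i j; first exact: A0d.
  rewrite iterS' mxE ler_norml.
  have P := (gauge_iter t hs A0p).2.
  have hw : forall k, 0 <= iter t (@fpos R n) A0 i k by move=> k; apply: ltW.
  have hS : 0 < \sum_k iter t (@fpos R n) A0 i k.
    by apply: (@pos_sum _ _ (fun k => iter t (@fpos R n) A0 i k) i) => [k|]; rewrite ?ltW.
  have hx : forall k, `|W j| - e <= iter t (@fpos R n) A0 k j <= `|W j| + e.
    by move=> k; have := IH k j; rewrite ler_norml => /andP[h1 h2]; apply/andP; split; lra.
  have /andP[h1 h2] := @wavg_bounds R n (fun k => iter t (@fpos R n) A0 i k)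
            (fun k => iter t (@fpos R n) A0 k j) _ _ hw hS hx.
  apply/andP; split; lra.
move=> t; rewrite XA (gauge_iter t hs A0p).1.
apply: maxdist_lt => // i j.
by rewrite gauge_dist //; apply: le_lt_trans (inv t i j) eeps.
Qed.

Lemma norm2_loss (R : realType) (x y m : R) :
  x * y <= 0 -> m <= `|x| -> m <= `|y| -> `|x + y| + 2 * m <= `|x| + `|y|.
Proof.
move=> hxy hx hy.
have [x0|x0] := lerP 0 x; have [y0|y0] := lerP 0 y.
- have e1 := ger0_norm x0; have e2 := ger0_norm y0.
  have e3 : `|x + y| = x + y by rewrite ger0_norm // addr_ge0.
  rewrite e1 e2 e3; rewrite e1 in hx; rewrite e2 in hy; nra.
- have e1 := ger0_norm x0; have e2 := ltr0_norm y0.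
  rewrite e1 e2; rewrite e1 in hx; rewrite e2 in hy.
  have : `|x + y| <= x - y - 2 * m by rewrite ler_norml; apply/andP; split; lra.
  lra.
- have e1 := ltr0_norm x0; have e2 := ger0_norm y0.
  rewrite e1 e2; rewrite e1 in hx; rewrite e2 in hy.
  have : `|x + y| <= - x + y - 2 * m by rewrite ler_norml; apply/andP; split; lra.
  lra.
- have e1 := ltr0_norm x0; have e2 := ltr0_norm y0.
  have e3 : `|x + y| = - (x + y) by apply: ltr0_norm; lra.
  rewrite e1 e2 e3; rewrite e1 in hx; rewrite e2 in hy; nra.
Qed.

Lemma sum2 (R : realType) n (F : 'I_n -> R) a b : a != b ->
  \sum_k F k = F a + (F b + \sum_(k | (k != a) && (k != b)) F k).
Proof.
move=> ab; have ba : b != a by rewrite eq_sym.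
rewrite (bigD1 a) //=; congr (_ + _); rewrite (bigD1 b) //=.
Qed.

Lemma norm_sum_loss (R : realType) n (u : 'I_n -> R) a b m :
  a != b -> u a * u b <= 0 -> m <= `|u a| -> m <= `|u b| ->
  `|\sum_k u k| + 2 * m <= \sum_k `|u k|.
Proof.
move=> ab hab ha hb.
rewrite (sum2 u ab) (sum2 (fun k => `|u k|) ab).
set r := \sum_(i | _) u i; set r' := \sum_(i | _) `|u i|.
have hr : `|r| <= r' by apply: ler_norm_sum.
have h2 := norm2_loss hab ha hb.
have h3 : `|u a + (u b + r)| <= `|u a + u b| + `|r| by rewrite addrA; apply: ler_normD.
lra.
Qed.

Lemma dsum_fE (R : realType) n (X : 'M[R]_n) i :
  (forall i, 0 < dsum X i) ->
  dsum (f_IbM X) i * dsum X i = \sum_j `|\sum_k X i k * X k j|.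
Proof.
move=> dp; have nz : forall i, dsum X i != 0 by move=> l; rewrite gt_eqF.
rewrite /dsum mulr_suml; apply: eq_bigr => j _.
rewrite fE // normrM normfV (gtr0_norm (dp i)) mulfVK //.
Qed.

Lemma sum_abs_prod (R : realType) n (X : 'M[R]_n) i :
  \sum_j \sum_k `|X i k * X k j| = \sum_k `|X i k| * dsum X k.
Proof.
rewrite exchange_big /=; apply: eq_bigr => k _; rewrite /dsum mulr_sumr.
by apply: eq_bigr => j _; rewrite normrM.
Qed.

Lemma dsum_f_le (R : realType) n (X : 'M[R]_n) i :
  (forall i, 0 < dsum X i) ->
  dsum (f_IbM X) i * dsum X i <= \sum_k `|X i k| * dsum X k.
Proof.
move=> dp; rewrite dsum_fE // -sum_abs_prod; apply: ler_sum => j _.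
exact: ler_norm_sum.
Qed.

Lemma dsum_f_loss (R : realType) n (X : 'M[R]_n) i j0 a b m :
  (forall i, 0 < dsum X i) -> a != b ->
  (X i a * X a j0) * (X i b * X b j0) <= 0 ->
  m <= `|X i a * X a j0| -> m <= `|X i b * X b j0| ->
  dsum (f_IbM X) i * dsum X i + 2 * m <= \sum_k `|X i k| * dsum X k.
Proof.
move=> dp ab h ha hb; rewrite dsum_fE // -sum_abs_prod.
rewrite (bigD1 j0) //= [X in _ <= X](bigD1 j0) //= -addrA (addrC (\sum_(j | _) _)) addrA.
apply: lerD.
  exact: (@norm_sum_loss R n (fun k => X i k * X k j0) a b m).
by apply: ler_sum => j _; apply: ler_norm_sum.
Qed.

Lemma count_lemma (R : realType) n (d : nat -> 'I_n -> R) (dm : nat -> R)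
    (P : nat -> Prop) T (eta kap : R) :
  0 < eta -> eta <= 1 -> 0 < kap ->
  (forall t i, d t i <= dm t) -> (forall t, exists i, dm t = d t i) ->
  (forall t, 0 <= dm t) ->
  (forall t, (T <= t)%N -> forall i l, d t.+1 i <= dm t - eta * (dm t - d t l)) ->
  (forall t, (T <= t)%N -> ~ P t -> exists i, d t.+1 i <= dm t - kap) ->
  exists t0, forall t, (t0 <= t)%N -> P t.
Proof.
move=> e0 e1 k0 dle datt dm0 Ha Hb.
have mono : forall t, (T <= t)%N -> dm t.+1 <= dm t.
  move=> t Tt; have [i ->] := datt t.+1; have [l El] := datt t.
  by have := Ha t Tt i l; rewrite -El subrr mulr0 subr0.
have drop : forall t, (T <= t)%N -> ~ P t -> dm t.+2 <= dm t - eta * kap.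
  move=> t Tt nP; have [i Hi] := Hb t Tt nP.
  have [i' ->] := datt t.+2.
  have h := Ha t.+1 (leqW Tt) i' i.
  have m := mono t Tt.
  have e1' : 0 <= 1 - eta by rewrite subr_ge0.
  have : (1 - eta) * dm t.+1 <= (1 - eta) * dm t by apply: ler_wpM2l.
  have : eta * d t.+1 i <= eta * (dm t - kap) by apply: ler_wpM2l => //; apply: ltW.
  move: h; set a := d t.+2 i'; set b := dm t.+1; set c := d t.+1 i; set z := dm t.
  move=> h h1 h2.
  have -> : z - eta * kap = (1 - eta) * z + eta * (z - kap) by ring.
  have E2 : b - eta * (b - c) = (1 - eta) * b + eta * c by ring.
  rewrite E2 in h.
  lra.
pose V t := dm t + dm t.+1.
have Vmono : forall t, (T <= t)%N -> V t.+1 <= V t.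
  move=> t Tt; rewrite /V; have := mono t Tt; have := mono t.+1 (leqW Tt); lra.
have Vdrop : forall t, (T <= t)%N -> ~ P t -> V t.+1 <= V t - eta * kap.
  move=> t Tt nP; rewrite /V; have := drop t Tt nP; lra.
have Vchain : forall s t, (T <= s)%N -> (s <= t)%N -> V t <= V s.
  move=> s t Ts /subnKC <-; elim: (t - s)%N => [|k IH]; first by rewrite addn0.
  rewrite addnS; apply: le_trans IH; apply: Vmono; exact: leq_trans Ts (leq_addr _ _).
apply: NNPP => H.
have inf : forall t0, exists t, (t0 <= t)%N /\ ~ P t.
  move=> t0; apply: NNPP => H2; apply: H; exists t0 => t Ht; apply: NNPP => nP.
  by apply: H2; exists t.
have claim : forall k : nat, exists t, (T <= t)%N /\ V t <= V T - k%:R * (eta * kap).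
  elim => [|k [t [Tt Ht]]]; first by exists T; rewrite mul0r subr0.
  have [t' [tt' nP]] := inf t.
  exists t'.+1; split; first by apply: leqW; apply: leq_trans tt'.
  have := Vdrop t' (leq_trans Tt tt') nP; have := Vchain t t' Tt tt'.
  rewrite -natr1 mulrDl mul1r; lra.
have V0 : forall t, 0 <= V t by move=> t; rewrite addr_ge0.
have ek : 0 < eta * kap by rewrite mulr_gt0.
have := @archi_boundP R (V T / (eta * kap)) (divr_ge0 (V0 T) (ltW ek)).
set k := Num.bound _; rewrite ltr_pdivrMr // => hk.
have [t [_ Ht]] := claim k; have := V0 t; lra.
Qed.

Lemma limn_einfE (R : realType) (u : nat -> \bar R) :
  limn_einf u = ereal_sup (range (einfs u)).
Proof. by rewrite limn_einf_lim; apply: cvg_lim => //; apply: cvg_einfs_sup. Qed.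

Lemma einf_pos (R : realType) (u : nat -> \bar R) (c : R) N :
  0 < c -> (forall t, (N <= t)%N -> (c%:E <= u t)%E) -> (0 < limn_einf u)%E.
Proof.
move=> c0 H; rewrite limn_einfE.
apply: (@lt_le_trans _ _ c%:E); first by rewrite lte_fin.
apply: (@le_trans _ _ (einfs u N)); last by apply: ereal_sup_ubound; exists N.
by apply: le_ereal_inf_tmp => _ [k /= Nk <-]; apply: H.
Qed.

Lemma einf_extract (R : realType) (u : nat -> \bar R) :
  (forall t, u t \is a fin_num) ->
  (0 < limn_einf u)%E -> exists c : R, 0 < c /\ exists N, forall t, (N <= t)%N -> (c%:E <= u t)%E.
Proof.
move=> uf; rewrite limn_einfE => /ereal_sup_gt [_ [N _ <-]] h.
have lb : forall t, (N <= t)%N -> (einfs u N <= u t)%E.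
  by move=> t Nt; apply: ereal_inf_lbound; exists t.
move: h lb; case E : (einfs u N) => [r| |] h lb.
- by exists r; split; [rewrite -lte_fin | exists N].
- by have := lb N (leqnn N); have := uf N; case: (u N).
- by [].
Qed.

Lemma minabs_le (R : realType) n (X : 'M[R]_n) i j : (minabs X <= (`|X i j|)%:E)%E.
Proof.
rewrite /minabs; apply: le_trans (bigmin_le _ i _) _.
exact: (bigmin_le _ j (fun j => (`|X i j|)%:E)).
Qed.

Lemma minabs_ge (R : realType) n (X : 'M[R]_n) (c : R) :
  (forall i j, c <= `|X i j|) -> (c%:E <= minabs X)%E.
Proof.
move=> h; rewrite /minabs; apply: le_bigmin => [|i _]; first exact: leey.
by apply: le_bigmin => [|j _]; [exact: leey | rewrite lee_fin].
Qed.

Lemma minabs_fin (R : realType) n (n_gt0 : (0 < n)%N) (X : 'M[R]_n) :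
  minabs X \is a fin_num.
Proof.
have h0 : (0%:E <= minabs X)%E by apply: minabs_ge => i j; exact: normr_ge0.
rewrite ge0_fin_numE //; apply: le_lt_trans (minabs_le X (Ordinal n_gt0) (Ordinal n_gt0)) _.
exact: ltey.
Qed.

Lemma sg_sym (R : realType) n (X : 'M[R]_n) : rsI X -> forall i k, Num.sg (X k i) = Num.sg (X i k).
Proof.
case=> _ [g [gp E]] i k.
have := congr1 Num.sg (E i k); rewrite !sgrM (gtr0_sg (gp i)) (gtr0_sg (gp k)) !mul1r.
by move=> ->.
Qed.

Lemma a_to_b (R : realType) n (n_gt0 : (0 < n)%N) (X0 : 'M[R]_n) :
  rsI X0 -> nonvanishing_appraisal (traj X0) ->
  exists t0, forall t, (t0 <= t)%N -> social_balance (traj X0 t).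
Proof.
move=> rs0 nva.
pose X t := traj X0 t.
have XS : forall t, X t.+1 = f_IbM (X t) by [].
have rs : forall t, rsI (X t) by elim => [|t IH] //; rewrite XS; apply: rsI_f.
have dp : forall t i, 0 < dsum (X t) i by move=> t i; apply: dsum_pos; case: (rs t).
have nz : forall t i, dsum (X t) i != 0 by move=> t i; rewrite gt_eqF.
pose i0 := Ordinal n_gt0.
have [q0 Hq0] := ex_argmax (i0, i0) (fun p : 'I_n * 'I_n => `|X0 p.1 p.2|).
set M0 := `|X0 q0.1 q0.2| in Hq0.
have bnd : forall t i j, `|X t i j| <= M0.
  elim => [|t IH] i j; first exact: (Hq0 (i, j)).
  rewrite XS fE // normrM normfV (gtr0_norm (dp t i)) ler_pdivrMr //.
  apply: le_trans (ler_norm_sum _ _ _) _.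
  rewrite /dsum mulr_sumr; apply: ler_sum => k _; rewrite normrM mulrC.
  by apply: ler_wpM2r => //; apply: IH.
have [c [c0 [T HT]]] := einf_extract (fun t => minabs_fin n_gt0 (X t)) nva.
have cle : forall t, (T <= t)%N -> forall i j, c <= `|X t i j|.
  by move=> t Tt i j; have := le_trans (HT t Tt) (minabs_le (X t) i j); rewrite lee_fin.
have cM : c <= M0 by apply: le_trans (cle T (leqnn T) i0 i0) (bnd T i0 i0).
have M0p : 0 < M0 by apply: lt_le_trans cM.
have nM : 0 < n%:R * M0 by rewrite mulr_gt0 // ltr0n.
have n1 : 1 <= n%:R :> R by rewrite ler1n.
have dbnd : forall t i, dsum (X t) i <= n%:R * M0.
  move=> t i; have -> : n%:R * M0 = \sum_(l < n) M0 by rewrite sumr_const card_ord mulr_natl.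
  by apply: ler_sum => l _; apply: bnd.
pose eta := c / (n%:R * M0).
pose kap := 2 * (c * c) / (n%:R * M0).
have eta0 : 0 < eta by rewrite divr_gt0.
have eta1 : eta <= 1.
  rewrite ler_pdivrMr // mul1r; apply: le_trans cM _.
  by rewrite -{1}(mul1r M0); apply: ler_wpM2r => //; apply: ltW.
have kap0 : 0 < kap by rewrite divr_gt0 // mulr_gt0 // mulr_gt0.
pose d t i := dsum (X t) i.
pose amax t := Order.arg_max i0 xpredT (fun i => d t i).
pose dm t := d t (amax t).
have dle : forall t i, d t i <= dm t.
  move=> t i; rewrite /dm /amax.
  by case: (@Order.TotalTheory.arg_maxP _ R _ i0 xpredT (fun i => d t i) isT) => k _ H; apply: H.
have key : forall t i l, (T <= t)%N ->
    \sum_k `|X t i k| * d t k <= d t i * dm t - eta * d t i * (dm t - d t l).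
  move=> t i l Tt.
  have E : \sum_k `|X t i k| * d t k =
           d t i * dm t - \sum_k `|X t i k| * (dm t - d t k).
    rewrite /d /dsum mulr_suml -sumrB; apply: eq_bigr => k _; ring.
  rewrite E lerD2l lerN2 (bigD1 l) //= -[X in X <= _]addr0; apply: lerD.
    have hA : eta * d t i <= `|X t i l|.
      apply: le_trans (cle t Tt i l); rewrite /eta mulrAC ler_pdivrMr // ler_wpM2l //.
        exact: ltW.
      exact: dbnd.
    have hB : 0 <= dm t - d t l by rewrite subr_ge0.
    move: hA hB; set z := dm t - d t l; set a := `|X t i l|; set w := d t i.
    move=> hA hB; nra.
  by apply: sumr_ge0 => k _; rewrite mulr_ge0 // subr_ge0.
apply: (@count_lemma R n d dm (fun t => social_balance (X t)) T eta kap) => //.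
- by move=> t; exists (amax t).
- by move=> t; apply: le_trans (dle t i0); apply: sumr_ge0 => k _.
- move=> t Tt i l.
  have h1 := dsum_f_le i (dp t); rewrite -XS in h1.
  have h2 := key t i l Tt.
  rewrite -(ler_pM2r (dp t i)); apply: le_trans h1 _; apply: le_trans h2 _.
  by rewrite /d; nra.
move=> t Tt nsb.
have diag : forall i, 0 < X t i i by case: (rs t).
have [i [j [k hne]]] : exists i j k,
    Num.sg (X t i j) * Num.sg (X t j k) * Num.sg (X t k i) != 1.
  apply: NNPP => H; apply: nsb; split => // i j k; apply/eqP.
  apply: NNPP => H2; apply: H; exists i, j, k; exact/negP.
have sgs := sg_sym (rs t).
have nzX : forall a b, X t a b != 0.
  by move=> a b; rewrite -normr_gt0; apply: lt_le_trans c0 (cle t Tt a b).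
have ij : i != j.
  apply/negP => /eqP E; move: hne; rewrite -E gtr0_sg // mul1r sgs sg_sq //.
  by rewrite eqxx.
have neg : (X t i i * X t i k) * (X t i j * X t j k) <= 0.
  rewrite leNgt; apply/negP => hp; move: hne.
  have := gtr0_sg hp; rewrite !sgrM (gtr0_sg (diag i)) mul1r -(sgs i k) => h.
  move/eqP; apply; apply: (etrans _ h); ring.
have mc : forall a b, c * c <= `|X t i a * X t a b|.
  move=> a b; rewrite normrM; apply: ler_pM; [exact: ltW | exact: ltW | exact: (cle t Tt) | exact: (cle t Tt)].
have h1 := dsum_f_loss (dp t) ij neg (mc i k) (mc j k); rewrite -XS in h1.
have h2 : \sum_l `|X t i l| * dsum (X t) l <= dsum (X t) i * dm t.
  have -> : dsum (X t) i * dm t = \sum_l `|X t i l| * dm t by rewrite /dsum mulr_suml.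
  apply: ler_sum => l _; apply: ler_wpM2l => //; exact: dle.
exists i; rewrite -(ler_pM2r (dp t i)).
have h3 : kap * dsum (X t) i <= 2 * (c * c).
  rewrite /kap mulrAC ler_pdivrMr //; apply: ler_wpM2l; last exact: dbnd.
  by rewrite mulr_ge0 // mulr_ge0 // ltW.
move: h1 h2 h3; rewrite /d; set y := dsum (f_IbM (X t)) i; set di := dsum (X t) i.
move=> h1 h2 h3; rewrite mulrBl; lra.
Qed.

Lemma c_to_a (R : realType) n (n_gt0 : (0 < n)%N) (X0 Xs : 'M[R]_n) :
  Q_IbM Xs -> \rank Xs = 1%N -> traj X0 @ \oo --> Xs ->
  nonvanishing_appraisal (traj X0).
Proof.
move=> hQ hr hc; have [W [Wn EX]] := Q_rank1 hQ hr.
have [k0 Hk0] := ex_argmin (Ordinal n_gt0) (fun j => `|W j|).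
pose mu := `|W k0|.
have mu0 : 0 < mu by rewrite normr_gt0.
have mu2 : 0 < mu / 2 by rewrite divr_gt0.
have := (cvgrPdist_lt _ _).1 hc _ mu2; case=> N _ HN.
apply: (@einf_pos R _ (mu / 2) N) => // t Nt.
apply: minabs_ge => i j.
have h1 := HN t Nt; have h2 := ent_le_norm (Xs - traj X0 t) i j.
rewrite !mxE in h2.
have h3 : `|Xs i j| = `|W j|.
  by rewrite EX mxE normrM normr_sg (Wn i) mul1r.
have h4 := ler_normD (Xs i j - traj X0 t i j) (traj X0 t i j); rewrite subrK in h4.
have h5 := Hk0 j; rewrite -/mu in h5.
move: h1 h2 h3 h4 h5; set a := `|Xs - traj X0 t|; set b := `|Xs i j - _|.
move=> h1 h2 h3 h4 h5; lra.
Qed.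

Lemma b_to_c (R : realType) n (n_gt0 : (0 < n)%N) (X0 : 'M[R]_n) :
  (exists t0, forall t, (t0 <= t)%N -> social_balance (traj X0 t)) ->
  exists Xs : 'M[R]_n, [/\ Q_IbM Xs, \rank Xs = 1%N & traj X0 @ \oo --> Xs].
Proof.
move=> [t0 H].
pose Y := traj X0 t0.
have [dpos tri] := H t0 (leqnn t0).
rewrite -/Y in dpos tri.
pose i0 := Ordinal n_gt0.
have nzY : forall a b, Y a b != 0.
  move=> a b; apply/negP => /eqP E; have := tri a b b.
  by rewrite E sgr0 !mul0r => /eqP; rewrite eq_sym oner_eq0.
pose s i := Num.sg (Y i0 i).
have hs : forall i, s i * s i = 1 by move=> i; apply: sg_sq.
have sgY : forall i j, Num.sg (Y i j) = s i * s j.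
  move=> i j.
  have e1 := tri i0 i j; have e2 := tri i0 j i0.
  rewrite (gtr0_sg (dpos i0)) mulr1 in e2.
  have e3 : Num.sg (Y j i0) = s j.
    by rewrite -[LHS]mul1r -(hs j) -mulrA e2 mulr1.
  rewrite e3 in e1; rewrite -/(s i) in e1.
  have : Num.sg (Y i j) = (s i * Num.sg (Y i j) * s j) * (s i * s j).
    have -> : s i * Num.sg (Y i j) * s j * (s i * s j) =
              Num.sg (Y i j) * (s i * s i) * (s j * s j) by ring.
    by rewrite !hs !mulr1.
  by rewrite e1 mul1r.
pose A0 : 'M[R]_n := \matrix_(i, j) `|Y i j|.
have A0p : pos A0 by move=> i j; rewrite mxE normr_gt0.
have YA : Y = G s A0.
  by apply/matrixP => i j; rewrite !mxE -sgY -numEsg.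
have [v [vp hv]] := fpos_lim n_gt0 A0p.
pose W j := s j * v j.
have Wn : forall j, W j != 0.
  move=> j; rewrite mulf_eq0 negb_or (gt_eqF (vp j)) andbT.
  by apply/negP => /eqP h; have := hs j; rewrite h mul0r => /eqP; rewrite eq_sym oner_eq0.
have sW : forall i, Num.sg (W i) = s i.
  by move=> i; rewrite sgrM (gtr0_sg (vp i)) mulr1 Num.Theory.sgr_id.
have [hQ hr] := Q_of n_gt0 Wn.
exists (sgout W); split => //.
apply/cvgrPdist_lt => e e0.
have e2 : 0 < e / 2 by rewrite divr_gt0.
have [N HN] := hv _ e2.
apply: (@ev _ (N + t0)) => t Nt.
have -> : traj X0 t = iter (t - t0) (@f_IbM R n) Y.
  by rewrite /Y /traj -iterD subnK // (leq_trans (leq_addl N t0) Nt).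
rewrite YA (gauge_iter _ hs A0p).1.
apply: le_lt_trans (_ : e / 2 < e); last by rewrite ltr_pdivrMr // ltr_pMr // ltr1n.
apply: norm_le_ent; first exact: ltW.
move=> i j; rewrite !mxE sW /W.
set a := (X in `|_ - _ * X| <= _).
have -> : s i * (s j * v j) - s i * s j * a = s i * s j * (v j - a) by ring.
rewrite !normrM !(norm_s (hs _)) !mul1r distrC.
by apply: HN; rewrite leq_subRL ?(leq_trans (leq_addl N t0) Nt) // addnC.
Qed.

Theorem theorem4p6 (R : realType) (n : nat) (n_gt0 : (0 < n)%N) :
  (forall Xs : 'M[R]_n, Q_IbM Xs -> \rank Xs = 1%N ->
     f_IbM Xs = Xs /\ locally_stable (@f_IbM R n) Xs)
  /\
  (forall X0 : 'M[R]_n, rs_symm_pos X0 ->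
     [/\ (nonvanishing_appraisal (traj X0) <->
          exists t0 : nat, forall t, (t0 <= t)%N -> social_balance (traj X0 t)),
         ((exists t0 : nat, forall t, (t0 <= t)%N -> social_balance (traj X0 t)) <->
          exists Xs : 'M[R]_n, [/\ Q_IbM Xs, \rank Xs = 1%N &
                                   traj X0 @ \oo --> Xs])
       & (nonvanishing_appraisal (traj X0) <->
          exists Xs : 'M[R]_n, [/\ Q_IbM Xs, \rank Xs = 1%N &
                                   traj X0 @ \oo --> Xs])]).
Proof.
split; first by move=> Xs; apply: part_i.
move=> X0 /rs_symm_rsI rs0.
have AB := a_to_b n_gt0 rs0.
have BC := @b_to_c R n n_gt0 X0.
have CA : (exists Xs : 'M[R]_n, [/\ Q_IbM Xs, \rank Xs = 1%N & traj X0 @ \oo --> Xs]) ->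
          nonvanishing_appraisal (traj X0).
  by case=> Xs [hQ hr hc]; apply: (c_to_a n_gt0 hQ hr hc).
split; split => h.
- exact: AB.
- exact: CA (BC h).
- exact: BC.
- exact: AB (CA h).
- exact: BC (AB h).
- exact: CA.
Qed.
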